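(* Let $X_1\in\mathbb{R}^{n_1\times d}$ and $X_2\in\mathbb{R}^{n_2\times d}$ be two data matrices with $\|X_1\|,\|X_2\|\le 1$ and $\operatorname{rank}(X_m)<d$, and consider the two tasks fitted in the identity ordering ($\tau(1)=1$, $\tau(2)=2$). The following are equivalent: (1) For every choice of labels $y_1,y_2$ such that $S=\{(X_1,y_1),(X_2,y_2)\}\in\mathcal{S}_2$ (equivalently, for every minimum-norm solution $w^\star$), $F_{\tau,S}(2)=0$. (2) $X_1P_2P_1=0_{n_1\times d}$. (3) Every principal angle between $\mathrm{range}(X_1^\top)$ and $\mathrm{range}(X_2^\top)$ is either $0$ or $\pi/2$.
   Context: Let $d\ge 1$, $T\ge1$. A task is a pair $(X_m,y_m)$ with $X_m\in\mathbb{R}^{n_m\times d}$, $y_m\in\mathbb{R}^{n_m}$ and $\operatorname{rank}(X_m)<d$. $\mathcal{S}_T$ denotes the set of collections $S=\{(X_m,y_m)\}_{m=1}^T$ of $T$ tasks such that $\|X_m\|\le 1$ (spectral norm) for all $m$ and there exists $w\in\mathbb{R}^d$ with $\|w\|\le 1$ and $y_m=X_mw$ for all $m$. A task ordering is a map $\tau:\mathbb{N}^+\to\{1,\dots,T\}$. Given $S$ and $\tau$, the iterates are $w_0=0$ and $w_t=w_{t-1}+X_{\tau(t)}^+(y_{\tau(t)}-X_{\tau(t)}w_{t-1})$ for $t\ge1$, where $A^+$ is the Moore–Penrose pseudoinverse (equivalently, $w_t$ is the Euclidean projection of $w_{t-1}$ onto $\{w: X_{\tau(t)}w=y_{\tau(t)}\}$).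 The forgetting at iteration $k$ is $F_{\tau,S}(k)=\frac1k\sum_{t=1}^k\|X_{\tau(t)}w_k-y_{\tau(t)}\|^2$. $w^\star$ denotes the minimum Euclidean-norm vector with $X_mw^\star=y_m$ for all $m$. $P_m=I-X_m^+X_m$ is the orthogonal projection onto $\ker X_m$. Principal angles: for data matrices $X_1,X_2$ let $r=\min(\operatorname{rank}X_1,\operatorname{rank}X_2)$. The principal angles $0\le\theta_1\le\dots\le\theta_r\le\pi/2$ between $\mathrm{range}(X_1^\top)$ and $\mathrm{range}(X_2^\top)$ are defined recursively by $\cos\theta_i=|u_i^\top v_i|$, where $(u_i,v_i)$ maximizes $|u^\top v|$ over unit vectors $u\in\mathrm{range}(X_1^\top)$, $v\in\mathrm{range}(X_2^\top)$ with $u\perp u_j$, $v\perp v_j$ for all $j<i$. *)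

(* Defs.v *)
From HB Require Import structures.
From mathcomp Require Import all_boot all_order all_algebra.
From mathcomp Require Import reals trigo.
From Stdlib Require ClassicalEpsilon.

Set Implicit Arguments.
Unset Strict Implicit.
Unset Printing Implicit Defensive.

Import Order.TTheory GRing.Theory Num.Theory.
Local Open Scope ring_scope.

Section Defs.
Variable R : realType.

Definition dotv {k : nat} (u v : 'cV[R]_k) : R := (u^T *m v) 0 0.
Definition sqnorm {k : nat} (v : 'cV[R]_k) : R := dotv v v.

Definition spec_norm_le1 {n d : nat} (X : 'M[R]_(n, d)) : Prop :=
  forall v : 'cV[R]_d, sqnorm (X *m v) <= sqnorm v.

Definition is_pinv {n d : nat} (X : 'M[R]_(n, d)) (Z : 'M[R]_(d, n)) : Prop :=
  [/\ X *m Z *m X = X, Z *m X *m Z = Z,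
      (X *m Z)^T = X *m Z & (Z *m X)^T = Z *m X].

Definition pinv {n d : nat} (X : 'M[R]_(n, d)) : 'M[R]_(d, n) :=
  ClassicalEpsilon.epsilon (inhabits 0) (is_pinv X).

Definition kerproj {n d : nat} (X : 'M[R]_(n, d)) : 'M[R]_d :=
  1%:M - pinv X *m X.

(* A collection of T tasks (X_m, y_m), m : 'I_T, with X_m of size n_m x d.
   Orderings tau : nat -> 'I_T (only values at t >= 1 matter). *)
Fixpoint iterate {T d : nat} (n : 'I_T -> nat)
    (X : forall m, 'M[R]_(n m, d)) (y : forall m, 'cV[R]_(n m))
    (tau : nat -> 'I_T) (t : nat) : 'cV[R]_d :=
  match t with
  | 0 => 0
  | t'.+1 =>
      let w := iterate X y tau t' in
      w + pinv (X (tau t)) *m (y (tau t) - X (tau t) *m w)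
  end.

Definition forgetting {T d : nat} (n : 'I_T -> nat)
    (X : forall m, 'M[R]_(n m, d)) (y : forall m, 'cV[R]_(n m))
    (tau : nat -> 'I_T) (k : nat) : R :=
  (k%:R)^-1 * \sum_(1 <= t < k.+1)
     sqnorm (X (tau t) *m iterate X y tau k - y (tau t)).

Definition in_ST {T d : nat} (n : 'I_T -> nat)
    (X : forall m, 'M[R]_(n m, d)) (y : forall m, 'cV[R]_(n m)) : Prop :=
  [/\ forall m, (\rank (X m) < d)%N,
      forall m, spec_norm_le1 (X m) &
      exists w : 'cV[R]_d, sqnorm w <= 1 /\ forall m, y m = X m *m w].

(* The identity ordering tau(t) = t (tasks 1..T are 'I_T indices 0..T-1). *)
Definition id_ordering (T : nat) : nat -> 'I_T.+1 := fun t => inord t.-1.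

Definition in_rowspace {n d : nat} (A : 'M[R]_(n, d)) (u : 'cV[R]_d) : Prop :=
  exists z : 'cV[R]_n, u = A^T *m z.

(* Admissible pairs at step i of the recursive definition of principal
   angles, given previously chosen u_j, v_j (j < i). *)
Definition pa_admissible {n1 n2 d : nat} (A : 'M[R]_(n1, d)) (B : 'M[R]_(n2, d))
    (u v : nat -> 'cV[R]_d) (i : nat) (u' v' : 'cV[R]_d) : Prop :=
  [/\ in_rowspace A u', in_rowspace B v', sqnorm u' = 1, sqnorm v' = 1 &
      forall j, (j < i)%N -> dotv u' (u j) = 0 /\ dotv v' (v j) = 0].

Definition principal_system {n1 n2 d : nat} (A : 'M[R]_(n1, d)) (B : 'M[R]_(n2, d))
    (u v : nat -> 'cV[R]_d) : Prop :=
  forall i, (i < minn (\rank A) (\rank B))%N ->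
    pa_admissible A B u v i (u i) (v i) /\
    forall u' v', pa_admissible A B u v i u' v' ->
      `|dotv u' v'| <= `|dotv (u i) (v i)|.

Definition principal_angle {d : nat} (u v : nat -> 'cV[R]_d) (i : nat) : R :=
  acos `|dotv (u i) (v i)|.

End Defs.

(* Main.v *)
Require Import Defs.
From HB Require Import structures.
From mathcomp Require Import all_boot all_order all_algebra.
From mathcomp Require Import reals trigo.
From mathcomp Require Import all_classical all_reals all_analysis.
From mathcomp Require Import ring lra.
From Stdlib Require ClassicalEpsilon.
Require Import Defs.
Set Implicit Arguments.
Unset Strict Implicit.
Unset Printing Implicit Defensive.
Import Order.TTheory GRing.Theory Num.Theory.
Import numFieldNormedType.Exports.
Local Open Scope ring_scope.

Section LA.
Variable R : realType.
Implicit Types (k : nat).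

Lemma dotvE k (u v : 'cV[R]_k) : dotv u v = \sum_i u i 0 * v i 0.
Proof. by rewrite /dotv mxE; apply: eq_bigr => i _; rewrite mxE. Qed.

Lemma dotvC k (u v : 'cV[R]_k) : dotv u v = dotv v u.
Proof. by rewrite !dotvE; apply: eq_bigr => i _; rewrite mulrC. Qed.

Lemma dotv_mull k m (M : 'M[R]_(m, k)) u v : dotv (M *m u) v = dotv u (M^T *m v).
Proof. by rewrite /dotv trmx_mul mulmxA. Qed.

Lemma dotv_mulr k m (M : 'M[R]_(k, m)) u v : dotv u (M *m v) = dotv (M^T *m u) v.
Proof. by rewrite dotv_mull trmxK. Qed.

Lemma dotvDl k (u v w : 'cV[R]_k) : dotv (u + v) w = dotv u w + dotv v w.
Proof. by rewrite /dotv linearD /= mulmxDl mxE. Qed.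

Lemma dotvDr k (u v w : 'cV[R]_k) : dotv w (u + v) = dotv w u + dotv w v.
Proof. by rewrite dotvC dotvDl !(dotvC w). Qed.

Lemma dotvZl k a (u w : 'cV[R]_k) : dotv (a *: u) w = a * dotv u w.
Proof. by rewrite /dotv linearZ /= -scalemxAl mxE. Qed.

Lemma dotvZr k a (u w : 'cV[R]_k) : dotv w (a *: u) = a * dotv w u.
Proof. by rewrite dotvC dotvZl dotvC. Qed.

Lemma dotvNl k (u w : 'cV[R]_k) : dotv (- u) w = - dotv u w.
Proof. by rewrite -scaleN1r dotvZl mulN1r. Qed.

Lemma dotvNr k (u w : 'cV[R]_k) : dotv w (- u) = - dotv w u.
Proof. by rewrite dotvC dotvNl dotvC. Qed.

Lemma dotvBl k (u v w : 'cV[R]_k) : dotv (u - v) w = dotv u w - dotv v w.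
Proof. by rewrite dotvDl dotvNl. Qed.

Lemma dotvBr k (u v w : 'cV[R]_k) : dotv w (u - v) = dotv w u - dotv w v.
Proof. by rewrite dotvDr dotvNr. Qed.

Lemma dotv0l k (w : 'cV[R]_k) : dotv 0 w = 0.
Proof. by rewrite /dotv linear0 mul0mx mxE. Qed.

Lemma dotv0r k (w : 'cV[R]_k) : dotv w 0 = 0.
Proof. by rewrite dotvC dotv0l. Qed.

Lemma sqnorm_ge0 k (v : 'cV[R]_k) : 0 <= sqnorm v.
Proof. by rewrite /sqnorm dotvE sumr_ge0 // => i _; rewrite -expr2 sqr_ge0. Qed.

Lemma sqnorm_eq0 k (v : 'cV[R]_k) : sqnorm v = 0 -> v = 0.
Proof.
rewrite /sqnorm dotvE => /eqP; rewrite psumr_eq0 => [/allP H|i _]; last first.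
  by rewrite -expr2 sqr_ge0.
apply/matrixP => i j; rewrite (ord1 j) mxE.
by have := H i (mem_index_enum _); rewrite -expr2 sqrf_eq0 => /eqP.
Qed.

Lemma sqnorm0 k : sqnorm (0 : 'cV[R]_k) = 0.
Proof. by rewrite /sqnorm dotv0l. Qed.

Lemma sqnormN k (v : 'cV[R]_k) : sqnorm (- v) = sqnorm v.
Proof. by rewrite /sqnorm dotvNl dotvNr opprK. Qed.

Lemma sqnormZ k a (v : 'cV[R]_k) : sqnorm (a *: v) = a ^+ 2 * sqnorm v.
Proof. by rewrite /sqnorm dotvZl dotvZr mulrA expr2. Qed.

Lemma row_sq_eq0 k (a : 'rV[R]_k) : a *m a^T = 0 -> a = 0.
Proof.
move=> H; have : sqnorm a^T = 0 by rewrite /sqnorm /dotv trmxK H mxE.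
by move/sqnorm_eq0 => /(congr1 trmx); rewrite trmxK trmx0.
Qed.

Lemma gram_unit r k (M : 'M[R]_(r, k)) : row_free M -> M *m M^T \in unitmx.
Proof.
move=> fM; rewrite -row_free_unit; apply/inj_row_free => v Hv.
have : (v *m M) *m (v *m M)^T = 0.
  by rewrite trmx_mul mulmxA -(mulmxA v) Hv mul0mx.
move/row_sq_eq0 => H; apply: (row_free_inj fM); by rewrite H mul0mx.
Qed.

Lemma pinv_exists_aux n k r (X : 'M[R]_(n, k)) (C : 'M[R]_(n, r)) (F : 'M[R]_(r, k)) :
  C *m F = X -> row_free F -> row_free C^T -> exists Z, is_pinv X Z.
Proof.
move=> eX fF fC.
have XCF : forall p (Y : 'M[R]_(k,p)), X *m Y = C *m F *m Y by move=> p Y; rewrite eX.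
have XCF' : forall p (Y : 'M[R]_(p,n)), Y *m X = Y *m C *m F by move=> p Y; rewrite -mulmxA eX.
have uG := gram_unit fF; have uH := gram_unit fC; rewrite trmxK in uH.
set G := F *m F^T in uG *; set H := C^T *m C in uH *.
exists (F^T *m invmx G *m invmx H *m C^T).
have XZ : X *m (F^T *m invmx G *m invmx H *m C^T) = C *m invmx H *m C^T.
  by rewrite XCF !mulmxA -(mulmxA C F F^T) -/G mulmxK.
have ZX : F^T *m invmx G *m invmx H *m C^T *m X = F^T *m invmx G *m F.
  by rewrite XCF' ?mulmxA -(mulmxA _ C^T C) -/H mulmxKV.
have sG : G^T = G by rewrite /G trmx_mul trmxK.
have sH : H^T = H by rewrite /H trmx_mul trmxK.
split.
- by rewrite XZ XCF' ?mulmxA -(mulmxA _ C^T C) -/H mulmxKV // eX.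
- by rewrite ZX !mulmxA -(mulmxA _ F F^T) -/G mulmxKV.
- by rewrite XZ !trmx_mul trmxK trmx_inv sH mulmxA.
- by rewrite ZX !trmx_mul trmxK trmx_inv sG mulmxA.
Qed.

Lemma pinv_exists n k (X : 'M[R]_(n, k)) : exists Z, is_pinv X Z.
Proof.
apply: (pinv_exists_aux (mulmx_base X)); first exact: row_base_free.
by rewrite /row_free mxrank_tr; exact: col_base_full.
Qed.

Lemma pinvP n k (X : 'M[R]_(n, k)) : is_pinv X (pinv X).
Proof.
rewrite /pinv; apply: ClassicalEpsilon.epsilon_spec; exact: pinv_exists.
Qed.

Section Proj.
Variables (n k : nat) (X : 'M[R]_(n, k)).
Definition Q := pinv X *m X.

Lemma QE : Q = pinv X *m X.
Proof. by []. Qed.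

Lemma Q_sym : Q^T = Q.
Proof. by case: (pinvP X). Qed.

Lemma XQ : X *m Q = X.
Proof. by case: (pinvP X) => H _ _ _; rewrite /Q mulmxA. Qed.

Lemma QQ : Q *m Q = Q.
Proof. by case: (pinvP X) => _ H _ _; rewrite /Q mulmxA H. Qed.

Lemma QXt : Q *m X^T = X^T.
Proof. by rewrite -{1}Q_sym -trmx_mul XQ. Qed.

Lemma in_rowspaceP (u : 'cV[R]_k) : in_rowspace X u <-> Q *m u = u.
Proof.
split; first by case=> z ->; rewrite mulmxA QXt.
move=> H; exists ((pinv X)^T *m u).
by rewrite mulmxA -trmx_mul Q_sym H.
Qed.

Lemma X0_Q0 (v : 'cV[R]_k) : (X *m v == 0) = (Q *m v == 0).
Proof.
apply/eqP/eqP => H; first by rewrite /Q -mulmxA H mulmx0.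
by rewrite -XQ -mulmxA H mulmx0.
Qed.

Lemma kerprojE : kerproj X = 1%:M - Q.
Proof. by []. Qed.

Lemma X_kerproj : X *m kerproj X = 0.
Proof. by rewrite kerprojE mulmxBr mulmx1 XQ subrr. Qed.

End Proj.

End LA.

Section P1.
Variables (R : realType) (d : nat) (n : 'I_2 -> nat) (X : forall m : 'I_2, 'M[R]_(n m, d)).

Lemma tau1 : id_ordering 1 1 = ord0.
Proof. by apply: val_inj; rewrite /= inordK. Qed.
Lemma tau2 : id_ordering 1 2 = ord_max.
Proof. by apply: val_inj; rewrite /= inordK. Qed.

Lemma iter2 (y : forall m, 'cV[R]_(n m)) w : (forall m, y m = X m *m w) ->
  iterate X y (id_ordering 1) 2 =
  w - kerproj (X ord_max) *m kerproj (X ord0) *m w.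
Proof.
move=> Hy; rewrite /= tau1 tau2 !Hy mulmx0 subr0 add0r.
rewrite !kerprojE /Q.
set Q1 := pinv (X ord0) *m X ord0; set Q2 := pinv (X ord_max) *m X ord_max.
rewrite -!mulmxA -/Q1 -/Q2 -mulmxBr.
rewrite !mulmxBl !mul1mx !mulmxBr ?mulmx1 !mulmxA.
rewrite /Q1 /Q2 -[w - _ - _]addrA -opprD.
by rewrite opprB [RHS]addrC subrK.
Qed.

Lemma forget2 (y : forall m, 'cV[R]_(n m)) w : (forall m, y m = X m *m w) ->
  forgetting X y (id_ordering 1) 2 =
  2^-1 * sqnorm (X ord0 *m kerproj (X ord_max) *m kerproj (X ord0) *m w).
Proof.
move=> Hy; rewrite /forgetting big_ltn // big_nat1 tau1 tau2 (iter2 Hy) !Hy.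
move: (X_kerproj (X ord_max)).
generalize (kerproj (X ord_max)) (kerproj (X ord0)) => P2 P1 H2.
rewrite !mulmxBr addrAC subrr add0r sqnormN !mulmxA.
by rewrite H2 !mul0mx subr0 subrr sqnorm0 addr0.
Qed.

Lemma sqnorm_delta (j : 'I_d) : sqnorm (delta_mx j 0 : 'cV[R]_d) = 1.
Proof. by rewrite /sqnorm /dotv trmx_delta mul_delta_mx mxE !eqxx. Qed.

Lemma cond12 : (forall m, spec_norm_le1 (X m)) -> (forall m, (\rank (X m) < d)%N) ->
  (forall y : forall m : 'I_2, 'cV[R]_(n m),
      in_ST X y -> forgetting X y (id_ordering 1) 2 = 0) <->
  X ord0 *m kerproj (X ord_max) *m kerproj (X ord0) = 0.
Proof.
move=> Hs Hr; split => [H|H y [_ _ [w [_ Hw]]]]; last first.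
  by rewrite (forget2 Hw) H !mul0mx sqnorm0 mulr0.
apply/matrixP => i j.
pose e : 'cV[R]_d := delta_mx j 0.
have He : in_ST X (fun m => X m *m e).
  split => //; exists e; split => //; by rewrite sqnorm_delta.
have := H _ He; rewrite (forget2 (w := e)) //.
move/eqP; rewrite mulf_eq0 invr_eq0 pnatr_eq0 /= => /eqP/sqnorm_eq0.
rewrite /e -colE => /matrixP/(_ i 0); rewrite mxE => ->; by rewrite !mxE.
Qed.

End P1.

Section H.
Variables (R : realType) (d : nat).
Implicit Types (a b w : 'cV[R]_d).

Lemma sqnormB a b : sqnorm (a - b) = sqnorm a - 2 * dotv a b + sqnorm b.
Proof.
rewrite /sqnorm dotvBl !dotvBr (dotvC b a).
lra.
Qed.
Lemma sqnormD a b : sqnorm (a + b) = sqnorm a + 2 * dotv a b + sqnorm b.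
Proof. rewrite /sqnorm dotvDl !dotvDr (dotvC b a); lra. Qed.

Lemma unit_cs a b : sqnorm a = 1 -> sqnorm b = 1 -> `|dotv a b| <= 1.
Proof.
move=> ha hb; have h1 := sqnorm_ge0 (a - b); have h2 := sqnorm_ge0 (a + b).
rewrite sqnormB ha hb in h1; rewrite sqnormD ha hb in h2.
rewrite ler_norml; apply/andP; split; lra.
Qed.

Lemma unit_eq a b : sqnorm a = 1 -> sqnorm b = 1 -> `|dotv a b| = 1 ->
  b = a \/ b = - a.
Proof.
move=> ha hb /eqP; rewrite eqr_norml => /andP[/orP[]/eqP h _].
  left; have : sqnorm (a - b) = 0 by rewrite sqnormB ha hb h; lra.
  by move/sqnorm_eq0/eqP; rewrite subr_eq0 => /eqP.
right; have : sqnorm (a + b) = 0 by rewrite sqnormD ha hb h; lra.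
by move/sqnorm_eq0/eqP; rewrite addr_eq0 => /eqP ->; rewrite opprK.
Qed.

Lemma sqnorm_gt0 w : w != 0 -> 0 < sqnorm w.
Proof.
move=> hw; rewrite lt_def sqnorm_ge0 andbT; apply/eqP => /sqnorm_eq0 h.
by rewrite h eqxx in hw.
Qed.

Definition nrmz w := (Num.sqrt (sqnorm w))^-1 *: w.

Lemma nrmz_unit w : w != 0 -> sqnorm (nrmz w) = 1.
Proof.
move=> hw; have hp := sqnorm_gt0 hw.
rewrite /nrmz sqnormZ exprVn sqr_sqrtr ?ltW // mulVf //; exact: lt0r_neq0.
Qed.

Lemma dotv_nrmz_l w b : dotv (nrmz w) b = (Num.sqrt (sqnorm w))^-1 * dotv w b.
Proof. by rewrite /nrmz dotvZl. Qed.

Lemma dotv_nrmz_r w b : dotv b (nrmz w) = (Num.sqrt (sqnorm w))^-1 * dotv b w.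
Proof. by rewrite /nrmz dotvZr. Qed.

Lemma mulmx_nrmz m (M : 'M[R]_(m, d)) w : M *m nrmz w = (Num.sqrt (sqnorm w))^-1 *: (M *m w).
Proof. by rewrite /nrmz scalemxAr. Qed.

Lemma inv_sqrt_gt0 w : w != 0 -> 0 < (Num.sqrt (sqnorm w))^-1.
Proof. by move=> hw; rewrite invr_gt0 sqrtr_gt0 sqnorm_gt0. Qed.

Lemma dotvQ m (X : 'M[R]_(m, d)) a b : dotv (Q X *m a) b = dotv a (Q X *m b).
Proof. by rewrite dotv_mull Q_sym. Qed.

Lemma mx_vec_eq m (M N : 'M[R]_(m, d)) : (forall x : 'cV[R]_d, M *m x = N *m x) -> M = N.
Proof.
move=> H; apply/matrixP => i j.
have := H (delta_mx j 0); rewrite -!colE => /matrixP/(_ i 0).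
by rewrite !mxE.
Qed.

End H.

Section SL.
Variables (R : realType) (d m : nat) (Y : 'M[R]_(m, d)).

Lemma rs_sub (z : 'cV[R]_d) : in_rowspace Y z -> (z^T <= Y)%MS.
Proof. by case=> c ->; rewrite trmx_mul trmxK submxMl. Qed.

Lemma span_lemma (u : nat -> 'cV[R]_d) (z : 'cV[R]_d) :
  (forall j, (j < \rank Y)%N -> in_rowspace Y (u j)) ->
  (forall j l, (j < \rank Y)%N -> (l < \rank Y)%N -> dotv (u j) (u l) = (j == l)%:R) ->
  in_rowspace Y z -> (forall l, (l < \rank Y)%N -> dotv z (u l) = 0) -> z = 0.
Proof.
move=> uY on zY zo.
pose U : 'M[R]_(\rank Y, d) := \matrix_(j, i) u j i 0.
have UU : U *m U^T = 1%:M.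
  apply/matrixP => j l; rewrite !mxE -(on j l (ltn_ord j) (ltn_ord l)) dotvE.
  by apply: eq_bigr => i _; rewrite !mxE.
have fU : row_free U by apply/row_freeP; exists U^T.
have sUY : (U <= Y)%MS.
  apply/row_subP => j; have -> : row j U = (u j)^T by apply/rowP => i; rewrite !mxE.
  exact/rs_sub/uY.
have sYU : (Y <= U)%MS.
  by rewrite -(mxrank_leqif_sup sUY).2 (eqP fU).
have /submxP [D zD] := submx_trans (rs_sub zY) sYU.
have Uz : U *m z = 0.
  apply/matrixP => j i; rewrite (ord1 i) [RHS]mxE -(zo j (ltn_ord j)) dotvC dotvE mxE.
  by apply: eq_bigr => k _; rewrite !mxE.
apply: sqnorm_eq0; rewrite /sqnorm /dotv zD -mulmxA Uz mulmx0 mxE.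
by [].
Qed.

End SL.

Section G.
Variables (R : realType) (d n1 n2 : nat) (X1 : 'M[R]_(n1, d)) (X2 : 'M[R]_(n2, d)).
Local Notation Q1 := (Q X1).
Local Notation Q2 := (Q X2).
Local Opaque Q.

Lemma zmod_aux (V : zmodType) (a b c : V) : a - b - (a - c) = 0 -> c = b.
Proof. by rewrite opprB addrC addrA subrK => /eqP; rewrite subr_eq0 => /eqP. Qed.

Lemma expand_aux : Q1 *m kerproj X2 *m kerproj X1 = Q1 *m Q2 *m Q1 - Q1 *m Q2.
Proof.
rewrite !kerprojE !mulmxBr !mulmx1 !mulmxBl !QQ.
by rewrite opprB addrC addrA subrK.
Qed.

Lemma cond2_comm : X1 *m kerproj X2 *m kerproj X1 = 0 <-> Q1 *m Q2 = Q2 *m Q1.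
Proof.
split => [H|H].
  have E : Q1 *m Q2 *m Q1 = Q1 *m Q2.
    apply/eqP; rewrite -subr_eq0 -expand_aux QE -!mulmxA (mulmxA X1) H.
    by rewrite mulmx0.
  have := congr1 trmx E; rewrite trmx_mul Q_sym trmx_mul !Q_sym mulmxA E => ->.
  by [].
have h : X1 *m kerproj X2 *m kerproj X1 = X1 *m (Q1 *m kerproj X2 *m kerproj X1).
  by rewrite (mulmxA X1 (Q1 *m _)) (mulmxA X1 Q1) XQ.
by rewrite h expand_aux H -(mulmxA Q2 Q1 Q1) QQ subrr mulmx0.
Qed.
Local Notation r := (minn (\rank X1) (\rank X2)).

Lemma adm_mono (u v : nat -> 'cV[R]_d) i j a b :
  pa_admissible X1 X2 u v i a b -> (j <= i)%N -> pa_admissible X1 X2 u v j a b.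
Proof.
case=> h1 h2 h3 h4 h5 ji; split => // l lj; apply: h5; exact: leq_trans lj ji.
Qed.

Lemma ps_prev (u v : nat -> 'cV[R]_d) i j : principal_system X1 X2 u v ->
  (i < r)%N -> dotv (u i) (v i) != 0 -> (j < i)%N -> dotv (u j) (v j) != 0.
Proof.
move=> PS ir nz ji; apply/eqP => z.
have jr : (j < r)%N by apply: ltn_trans ji ir.
have [adm _] := PS i ir; have [_ mx] := PS j jr.
have := mx _ _ (adm_mono adm (ltnW ji)); rewrite z normr0.
by rewrite normr_le0 (negbTE nz).
Qed.

Lemma in_rs_Q m (Y : 'M[R]_(m, d)) (a : 'cV[R]_d) : in_rowspace Y a -> Q Y *m a = a.
Proof. by move/in_rowspaceP. Qed.

Lemma comm_angles (u v : nat -> 'cV[R]_d) : Q1 *m Q2 = Q2 *m Q1 ->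
  principal_system X1 X2 u v -> forall i, (i < r)%N ->
  `|dotv (u i) (v i)| = 0 \/ `|dotv (u i) (v i)| = 1.
Proof.
move=> C PS; elim/ltn_ind => i IH ir.
have [z|nz] := eqVneq (dotv (u i) (v i)) 0; first by left; rewrite z normr0.
right.
have [adm mx] := PS i ir; case: (adm) => ui vi nui nvi orth.
have Hj : forall j, (j < i)%N ->
    [/\ Q2 *m u j = u j, Q1 *m u j = u j & (v j = u j \/ v j = - u j)].
  move=> j ji; have jr : (j < r)%N by apply: ltn_trans ji ir.
  have [[uj vj nuj nvj _] _] := PS j jr.
  have nzj := ps_prev PS ir nz ji.
  have cj : `|dotv (u j) (v j)| = 1.
    case: (IH j ji jr) => // /eqP; rewrite normr_eq0 => /eqP h.
    by rewrite h eqxx in nzj.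
  have uv := unit_eq nuj nvj cj.
  split => //; last exact: in_rs_Q.
  case: uv => e.
    by rewrite e in vj; exact: in_rs_Q.
  by have := in_rs_Q vj; rewrite e mulmxN => /oppr_inj.
pose w := Q2 *m u i.
have Q1w : Q1 *m w = w by rewrite /w mulmxA C -mulmxA (in_rs_Q ui).
have Q2w : Q2 *m w = w by rewrite /w mulmxA QQ.
have dw : dotv w (v i) = dotv (u i) (v i) by rewrite /w dotvQ (in_rs_Q vi).
have wnz : w != 0 by apply/eqP => w0; rewrite -dw w0 dotv0l eqxx in nz.
have adw : pa_admissible X1 X2 u v i (nrmz w) (nrmz w).
  split.
  - by apply/in_rowspaceP; rewrite mulmx_nrmz Q1w.
  - by apply/in_rowspaceP; rewrite mulmx_nrmz Q2w.
  - exact: nrmz_unit.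
  - exact: nrmz_unit.
  move=> j ji; have [h2 _ uv] := Hj j ji; have [q1 q2] := orth j ji.
  have e1 : dotv w (u j) = 0 by rewrite /w dotvQ h2.
  split; rewrite dotv_nrmz_l ?e1 ?mulr0 //.
  by case: uv => ->; rewrite ?dotvNr e1 ?oppr0 mulr0.
have := mx _ _ adw; have := nrmz_unit wnz; rewrite /sqnorm => ->.
rewrite normr1 => h; apply/eqP; rewrite eq_le h andbT.
exact: unit_cs.
Qed.

Lemma dotv_sumr k (b : 'cV[R]_d) (F : 'I_k -> 'cV[R]_d) :
  dotv b (\sum_(j < k) F j) = \sum_(j < k) dotv b (F j).
Proof. by rewrite /dotv mulmx_sumr summxE. Qed.

Lemma dotv_suml k (b : 'cV[R]_d) (F : 'I_k -> 'cV[R]_d) :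
  dotv (\sum_(j < k) F j) b = \sum_(j < k) dotv (F j) b.
Proof. by rewrite dotvC dotv_sumr; apply: eq_bigr => j _; rewrite dotvC. Qed.

Lemma zo_comm (u v : nat -> 'cV[R]_d) : principal_system X1 X2 u v ->
  (forall i, (i < r)%N -> `|dotv (u i) (v i)| = 0 \/ `|dotv (u i) (v i)| = 1) ->
  Q1 *m Q2 = Q2 *m Q1.
Proof.
move=> PS H01.
have onu : forall j l, (j < r)%N -> (l < r)%N -> dotv (u j) (u l) = (j == l)%:R.
  move=> j l jr lr; case: (ltngtP j l) => [jl|lj|->].
  - have [[_ _ _ _ o] _] := PS l lr.
    by rewrite dotvC (o j jl).1.
  - have [[_ _ _ _ o] _] := PS j jr.
    by rewrite (o l lj).1.
  - by have [[_ _ nu _ _] _] := PS l lr.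
pose P := fun i => (r <= i)%N || (dotv (u i) (v i) == 0).
have exP : exists i, P i by exists r; rewrite /P leqnn.
case: (ex_minnP exP) => k Pk kmin.
have kr : (k <= r)%N by apply: kmin; rewrite /P leqnn.
have Hj : forall j, (j < k)%N ->
    [/\ (j < r)%N, Q2 *m u j = u j, Q1 *m u j = u j & (v j = u j \/ v j = - u j)].
  move=> j jk; have jr : (j < r)%N := leq_trans jk kr.
  have nzj : dotv (u j) (v j) != 0.
    apply/negP => z; have := kmin j; rewrite /P z orbT => /(_ isT).
    by rewrite leqNgt jk.
  have [[uj vj nuj nvj _] _] := PS j jr.
  have cj : `|dotv (u j) (v j)| = 1.
    case: (H01 j jr) => // /eqP; rewrite normr_eq0 => /eqP h.
    by rewrite h eqxx in nzj.
  have uv := unit_eq nuj nvj cj.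
  split => //; last exact: in_rs_Q.
  case: uv => e.
    by rewrite e in vj; exact: in_rs_Q.
  by have := in_rs_Q vj; rewrite e mulmxN => /oppr_inj.
have Hk : (k < r)%N -> dotv (u k) (v k) = 0.
  by move=> kr'; move: Pk; rewrite /P leqNgt kr' /= => /eqP.
suff G : forall a : 'cV[R]_d, Q1 *m a = a -> Q1 *m (Q2 *m a) = Q2 *m a.
  have G' : Q1 *m Q2 *m Q1 = Q2 *m Q1.
    apply: mx_vec_eq => x.
    rewrite -(mulmxA (Q1 *m Q2) Q1 x) -(mulmxA Q1 Q2 (Q1 *m x)) -(mulmxA Q2 Q1 x).
    by apply: G; rewrite (mulmxA Q1 Q1 x) QQ.
  have := congr1 trmx G'; rewrite (trmx_mul (Q1 *m Q2) Q1) (trmx_mul Q1 Q2).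
  rewrite (trmx_mul Q2 Q1) !Q_sym (mulmxA Q1 Q2 Q1) G' => <-.
  by [].
move=> a Qa.
pose p := \sum_(j < k) (dotv (u j) a *: u j).
have Q2p : Q2 *m p = p.
  rewrite mulmx_sumr; apply: eq_bigr => j _.
  by rewrite -scalemxAr; have [_ -> _ _] := Hj j (ltn_ord j).
have Q1p : Q1 *m p = p.
  rewrite mulmx_sumr; apply: eq_bigr => j _.
  by rewrite -scalemxAr; have [_ _ -> _] := Hj j (ltn_ord j).
pose b := a - p.
have Q1b : Q1 *m b = b by rewrite /b mulmxBr Qa Q1p.
have bo : forall l, (l < k)%N -> dotv b (u l) = 0.
  move=> l lk; rewrite /b dotvBl dotv_suml (bigD1 (Ordinal lk)) //= big1.
    have [lr _ _ _] := Hj l lk.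
    by rewrite dotvZl onu // eqxx mulr1 addr0 dotvC subrr.
  move=> j jne; rewrite dotvZl onu //; last by have [] := Hj l lk.
    by rewrite (_ : (j == l :> nat) = false) ?mulr0 //; apply/negP => /eqP e;
      move: jne; rewrite -val_eqE /= e eqxx.
  by have [] := Hj j (ltn_ord j).
pose t := Q2 *m b.
suff t0 : t = 0.
  have e : Q2 *m a = p by rewrite -(subrK p a) -/b mulmxDr -/t t0 add0r Q2p.
  by rewrite e Q1p.
have Q2t : Q2 *m t = t by rewrite /t (mulmxA Q2 Q2 b) QQ.
have to : forall l, (l < k)%N -> dotv t (u l) = 0.
  by move=> l lk; have [_ h _ _] := Hj l lk; rewrite /t dotvQ h bo.
case: (ltnP k r) => [kr'|rk].
- have [//|tnz] := eqVneq t 0; exfalso.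
  have bnz : b != 0 by apply/eqP => b0; rewrite /t b0 mulmx0 eqxx in tnz.
  have adm : pa_admissible X1 X2 u v k (nrmz b) (nrmz t).
    split.
    - by apply/in_rowspaceP; rewrite mulmx_nrmz Q1b.
    - by apply/in_rowspaceP; rewrite mulmx_nrmz Q2t.
    - exact: nrmz_unit.
    - exact: nrmz_unit.
    move=> l lk; have [_ _ _ uv] := Hj l lk.
    split; rewrite dotv_nrmz_l; first by rewrite bo // mulr0.
    by case: uv => ->; rewrite ?dotvNr to ?oppr0 // mulr0.
  have [_ mx] := PS k kr'.
  have := mx _ _ adm; rewrite Hk // normr0 normr_le0 dotv_nrmz_l dotv_nrmz_r.
  have -> : dotv b t = sqnorm t by rewrite /t -{1}(QQ X2) -(mulmxA Q2 Q2 b) -dotvQ.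
  have tp := sqnorm_gt0 tnz.
  by rewrite gt_eqF // !mulr_gt0 // ?inv_sqrt_gt0.
- have kr2 : k = r by apply/eqP; rewrite eqn_leq kr rk.
  case: (leqP (\rank X1) (\rank X2)) => h.
  + have rE : r = \rank X1 by apply/minn_idPl.
    have b0 : b = 0.
      apply: (@span_lemma _ _ _ X1 u) => //.
      * move=> j jr; have jk : (j < k)%N by rewrite kr2 rE.
        by have [_ _ h1 _] := Hj j jk; apply/in_rowspaceP.
      * by move=> j l; rewrite -rE; exact: onu.
      * exact/in_rowspaceP.
      * by move=> l lr; apply: bo; rewrite kr2 rE.
    by rewrite /t b0 mulmx0.
  + have rE : r = \rank X2 by apply/minn_idPr/ltnW.
    apply: (@span_lemma _ _ _ X2 u) => //.
    * move=> j jr; have jk : (j < k)%N by rewrite kr2 rE.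
      by have [_ h1 _ _] := Hj j jk; apply/in_rowspaceP.
    * by move=> j l; rewrite -rE; exact: onu.
    * exact/in_rowspaceP.
    * by move=> l lr; apply: to; rewrite kr2 rE.
Qed.

End G.

Section Cont.
Variables (R : realType) (N : nat).
Local Notation T := 'rV[R]_N.
Implicit Types f g : T -> R.

Lemma cD f g : continuous f -> continuous g -> continuous (fun p => f p + g p).
Proof. by move=> cf cg x; exact: (continuousD (cf x) (cg x)). Qed.

Lemma cM f g : continuous f -> continuous g -> continuous (fun p => f p * g p).
Proof. by move=> cf cg x; exact: (continuousM (cf x) (cg x)). Qed.

Lemma cN f : continuous f -> continuous (fun p => - f p).
Proof. by move=> cf x; exact: (continuousN (cf x)). Qed.

Lemma cB f g : continuous f -> continuous g -> continuous (fun p => f p - g p).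
Proof. by move=> cf cg; apply: cD => //; exact: cN. Qed.

Lemma cC (c : R) : continuous (fun _ : T => c).
Proof. exact: cst_continuous. Qed.

Lemma cS (I : Type) (s : seq I) (F : I -> T -> R) :
  (forall i, continuous (F i)) -> continuous (fun p => \sum_(i <- s) F i p).
Proof.
move=> cF; elim: s => [|x s IH].
  have -> : (fun p : T => \sum_(i <- [::]) F i p) = fun _ => 0.
    by apply: boolp.funext => p; rewrite big_nil.
  exact: cC.
have -> : (fun p => \sum_(i <- x :: s) F i p) = fun p => F x p + \sum_(i <- s) F i p.
  by apply: boolp.funext => p; rewrite big_cons.
exact: cD.
Qed.

Lemma cNorm f : continuous f -> continuous (fun p => `|f p|).
Proof.
move=> cf x; apply: (continuous_comp (cf x)); exact: norm_continuous.
Qed.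

Lemma cCoord j : continuous (fun p : T => p ord0 j).
Proof. exact: coord_continuous. Qed.

End Cont.

Section Ex.
Variables (R : realType) (d : nat).

Lemma ortho_exists m (Y : 'M[R]_(m, d)) (w : nat -> 'cV[R]_d) i :
  (i < \rank Y)%N ->
  exists z : 'cV[R]_d, [/\ z != 0, in_rowspace Y z &
     forall j, (j < i)%N -> dotv z (w j) = 0].
Proof.
move=> iY.
pose B := row_base Y.
pose W : 'M[R]_(i, d) := \matrix_(j, l) w j l 0.
pose M := B *m W^T.
have nf : ~~ row_free M.
  rewrite /row_free; apply/negP => /eqP e.
  by have := rank_leq_col M; rewrite e leqNgt iY.
have [x xnz xM] : exists2 x : 'rV[R]_(\rank Y), x != 0 & x *m M = 0.
  case: (boolp.pselect (exists2 x : 'rV[R]_(\rank Y), x != 0 & x *m M = 0)) => // H.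
  case/negP: nf; apply: inj_row_free => x xM; apply/eqP/negPn/negP => xnz.
  by apply: H; exists x.
exists (x *m B)^T; split.
- apply/negP; rewrite trmx_eq0 => /eqP xB.
  have : x *m B = 0 *m B by rewrite xB mul0mx.
  by move/(row_free_inj (row_base_free Y)) => x0; rewrite x0 eqxx in xnz.
- have : (x *m B <= Y)%MS by have := submxMl x B; rewrite /B eq_row_base.
  case/submxP => D e; exists D^T; by rewrite -trmx_mul -e.
- move=> j ji.
  have : (W *m (x *m B)^T) = 0 by rewrite -(trmxK W) -trmx_mul -mulmxA xM trmx0.
  move/matrixP/(_ (Ordinal ji) 0); rewrite !mxE => h.
  rewrite dotvC dotvE; apply: (etrans _ h); apply: eq_bigr => l _; by rewrite !mxE.
Qed.

Local Notation V := 'rV[R]_(d + d).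
Definition fstv (p : V) : 'cV[R]_d := (lsubmx p)^T.
Definition sndv (p : V) : 'cV[R]_d := (rsubmx p)^T.
Definition vcont (Fv : V -> 'cV[R]_d) := forall l, continuous (fun p => Fv p l 0).

Lemma vc_fst : vcont fstv.
Proof.
move=> l; have -> : (fun p => fstv p l 0) = fun p : V => p ord0 (lshift d l).
  by apply: boolp.funext => p; rewrite /fstv !mxE.
exact: cCoord.
Qed.

Lemma vc_snd : vcont sndv.
Proof.
move=> l; have -> : (fun p => sndv p l 0) = fun p : V => p ord0 (rshift d l).
  by apply: boolp.funext => p; rewrite /sndv !mxE.
exact: cCoord.
Qed.

Lemma vc_mul (M : 'M[R]_(d, d)) Fv : vcont Fv -> vcont (fun p => M *m Fv p).
Proof.
move=> c l; have -> : (fun p => (M *m Fv p) l 0) = fun p => \sum_k M l k * Fv p k 0.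
  by apply: boolp.funext => p; rewrite mxE.
by apply: cS => k; apply: cM => //; exact: cC.
Qed.

Lemma vc_B Fv Gv : vcont Fv -> vcont Gv -> vcont (fun p => Fv p - Gv p).
Proof.
move=> c1 c2 l; have -> : (fun p => (Fv p - Gv p) l 0) = fun p => Fv p l 0 - Gv p l 0.
  by apply: boolp.funext => p; rewrite !mxE.
exact: cB.
Qed.

Lemma vc_C (c : 'cV[R]_d) : vcont (fun _ => c).
Proof. move=> l; exact: cC. Qed.

Lemma c_dot Fv Gv : vcont Fv -> vcont Gv -> continuous (fun p => dotv (Fv p) (Gv p)).
Proof.
move=> c1 c2; have -> : (fun p => dotv (Fv p) (Gv p)) = fun p => \sum_k Fv p k 0 * Gv p k 0.
  by apply: boolp.funext => p; rewrite dotvE.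
by apply: cS => k; apply: cM.
Qed.

Lemma coord_le1 (x : 'cV[R]_d) k : sqnorm x = 1 -> -1 <= x k 0 <= 1.
Proof.
move=> h; have : x k 0 ^+ 2 <= 1.
  rewrite -h /sqnorm dotvE (bigD1 k) //= -expr2 lerDl sumr_ge0 // => j _.
  by rewrite -expr2 sqr_ge0.
by move=> h2; apply/andP; split; nra.
Qed.

Lemma paddr_eq0' (a b : R) : 0 <= a -> 0 <= b -> a + b = 0 -> a = 0 /\ b = 0.
Proof. by move=> ha hb /eqP; rewrite paddr_eq0 // => /andP[/eqP -> /eqP ->]. Qed.

Variables (n1 n2 : nat) (X1 : 'M[R]_(n1, d)) (X2 : 'M[R]_(n2, d)).
Variables (u v : nat -> 'cV[R]_d) (i : nat).

Definition Gf (p : V) : R :=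
  sqnorm (Q X1 *m fstv p - fstv p) + sqnorm (Q X2 *m sndv p - sndv p) +
  (sqnorm (fstv p) - 1) ^+ 2 + (sqnorm (sndv p) - 1) ^+ 2 +
  \sum_(j < i) ((dotv (fstv p) (u j)) ^+ 2 + (dotv (sndv p) (v j)) ^+ 2).

Lemma adm_G (p : V) : pa_admissible X1 X2 u v i (fstv p) (sndv p) <-> Gf p = 0.
Proof.
split.
  case=> /in_rowspaceP h1 /in_rowspaceP h2 h3 h4 h5.
  rewrite /Gf h1 h2 h3 h4 !subrr sqnorm0 expr0n /= !add0r big1 // => j _.
  by have [-> ->] := h5 j (ltn_ord j); rewrite expr0n addr0.
rewrite /Gf => h.
have g0 : forall x : R, 0 <= x ^+ 2 by move=> x; exact: sqr_ge0.
have s0 : 0 <= \sum_(j < i) ((dotv (fstv p) (u j)) ^+ 2 + (dotv (sndv p) (v j)) ^+ 2).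
  by apply: sumr_ge0 => j _; rewrite addr_ge0.
move/eqP: h; rewrite !paddr_eq0 ?addr_ge0 ?sqnorm_ge0 ?sqr_ge0 ?s0 //.
move=> /andP[/andP[/andP[/andP[/eqP h1 /eqP h2] /eqP h3] /eqP h4] h5].
split.
- by apply/in_rowspaceP/eqP; rewrite -subr_eq0; apply/eqP/sqnorm_eq0.
- by apply/in_rowspaceP/eqP; rewrite -subr_eq0; apply/eqP/sqnorm_eq0.
- by apply/eqP; rewrite -subr_eq0 -sqrf_eq0 h3.
- by apply/eqP; rewrite -subr_eq0 -sqrf_eq0 h4.
move=> j ji; move: h5; rewrite psumr_eq0 => [/allP/(_ (Ordinal ji))|k _].
  rewrite mem_index_enum => /(_ isT) /=; rewrite paddr_eq0 ?sqr_ge0 //.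
  by rewrite !sqrf_eq0 => /andP[/eqP -> /eqP ->].
by rewrite addr_ge0.
Qed.

Lemma c_sq (f : V -> R) : continuous f -> continuous (fun p => f p ^+ 2).
Proof.
move=> c; have -> : (fun p => f p ^+ 2) = fun p => f p * f p.
  by apply: boolp.funext => p; rewrite expr2.
exact: cM.
Qed.

Lemma cont_G : continuous Gf.
Proof.
have vf1 : vcont (fun p => Q X1 *m fstv p - fstv p).
  by apply: vc_B; [apply: vc_mul; exact: vc_fst|exact: vc_fst].
have vf2 : vcont (fun p => Q X2 *m sndv p - sndv p).
  by apply: vc_B; [apply: vc_mul; exact: vc_snd|exact: vc_snd].
rewrite /Gf; apply: cD; [apply: cD; [apply: cD; [apply: cD|]|]|].
- exact: c_dot.
- exact: c_dot.
- by apply: c_sq; apply: cB; [apply: c_dot; exact: vc_fst|exact: cC].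
- by apply: c_sq; apply: cB; [apply: c_dot; exact: vc_snd|exact: cC].
- apply: cS => j; apply: cD; apply: c_sq; apply: c_dot.
  + exact: vc_fst.
  + exact: vc_C.
  + exact: vc_snd.
  + exact: vc_C.
Qed.

Definition mk (a b : 'cV[R]_d) : V := row_mx a^T b^T.
Lemma fst_mk a b : fstv (mk a b) = a. Proof. by rewrite /fstv /mk row_mxKl trmxK. Qed.
Lemma snd_mk a b : sndv (mk a b) = b. Proof. by rewrite /sndv /mk row_mxKr trmxK. Qed.

Local Open Scope classical_set_scope.
Lemma max_exists : (i < minn (\rank X1) (\rank X2))%N ->
  exists a b, pa_admissible X1 X2 u v i a b /\
    forall a' b', pa_admissible X1 X2 u v i a' b' -> `|dotv a' b'| <= `|dotv a b|.
Proof.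
move=> ir.
have i1 : (i < \rank X1)%N by apply: leq_trans ir (geq_minl _ _).
have i2 : (i < \rank X2)%N by apply: leq_trans ir (geq_minr _ _).
have [z1 [z1nz z1r z1o]] := ortho_exists (Y := X1) u i1.
have [z2 [z2nz z2r z2o]] := ortho_exists (Y := X2) v i2.
have adm0 : pa_admissible X1 X2 u v i (nrmz z1) (nrmz z2).
  split; [ | | exact: nrmz_unit | exact: nrmz_unit | ].
  - by apply/in_rowspaceP; rewrite mulmx_nrmz (proj1 (in_rowspaceP _ _) z1r).
  - by apply/in_rowspaceP; rewrite mulmx_nrmz (proj1 (in_rowspaceP _ _) z2r).
  - by move=> j ji; rewrite !dotv_nrmz_l z1o // z2o // !mulr0.
pose S := [set p : V | Gf p = 0].
have S0 : S !=set0 by exists (mk (nrmz z1) (nrmz z2)); apply/adm_G; rewrite fst_mk snd_mk.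
have clS : closed S.
  exact: ((continuous_closedP Gf).1 cont_G _ (@closed_eq _ 0)).
have cbox := @rV_compact _ (d + d) (fun=> `[(-1 : R), 1]%classic) (fun _ => @segment_compact R (-1) 1).
have Sbox : S `<=` [set w : V | forall j, `[(-1 : R), 1]%classic (w ord0 j)].
  move=> p /adm_G [_ _ nn1 nn2 _] j /=; rewrite in_itv /=.
  case: (split_ordP j) => k ->.
    by have := coord_le1 k nn1; rewrite /fstv !mxE.
  by have := coord_le1 k nn2; rewrite /sndv !mxE.
have cS : compact S by apply: (subclosed_compact clS cbox Sbox).
have cf : continuous (fun p : V => `|dotv (fstv p) (sndv p)|).
  by apply: cNorm; apply: c_dot; [exact: vc_fst|exact: vc_snd].
have [c cin cmax] := EVT_max_rV S0 cS (continuous_subspaceT cf).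
exists (fstv c), (sndv c); split; first by apply/adm_G; exact: set_mem.
move=> a' b' adm'; have := cmax (mk a' b'); rewrite fst_mk snd_mk; apply.
by apply: mem_set; apply/adm_G; rewrite fst_mk snd_mk.
Qed.

End Ex.

Section Seq.
Variables (R : realType) (d n1 n2 : nat) (X1 : 'M[R]_(n1, d)) (X2 : 'M[R]_(n2, d)).
Local Notation r := (minn (\rank X1) (\rank X2)).

Lemma adm_ext (u v u' v' : nat -> 'cV[R]_d) i a b :
  (forall j, (j < i)%N -> u j = u' j /\ v j = v' j) ->
  pa_admissible X1 X2 u v i a b -> pa_admissible X1 X2 u' v' i a b.
Proof.
move=> e [h1 h2 h3 h4 h5]; split => // j ji.
by have [<- <-] := e j ji; exact: h5.
Qed.

Definition good (u v : nat -> 'cV[R]_d) i :=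
  pa_admissible X1 X2 u v i (u i) (v i) /\
  forall a' b', pa_admissible X1 X2 u v i a' b' -> `|dotv a' b'| <= `|dotv (u i) (v i)|.

Lemma good_ext (u v u' v' : nat -> 'cV[R]_d) i :
  (forall j, (j <= i)%N -> u j = u' j /\ v j = v' j) -> good u v i -> good u' v' i.
Proof.
move=> e [adm mx].
have e' : forall j, (j < i)%N -> u j = u' j /\ v j = v' j by move=> j ji; apply: e; exact: ltnW.
have e'' : forall j, (j < i)%N -> u' j = u j /\ v' j = v j.
  by move=> j ji; have [-> ->] := e' j ji.
rewrite /good; have [<- <-] := e i (leqnn i); split; first exact: adm_ext e' adm.
by move=> a' b' /(adm_ext e'') /mx.
Qed.

Lemma ps_prefix k : exists u v : nat -> 'cV[R]_d,
  forall i, (i < k)%N -> (i < r)%N -> good u v i.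
Proof.
elim: k => [|k [u [v H]]]; first by exists (fun _ => 0), (fun _ => 0).
case: (ltnP k r) => kr; last first.
  exists u, v => i ik ir; apply: H => //.
  by rewrite ltnS leq_eqVlt in ik; case/orP: ik => // /eqP ei; rewrite ei ltnNge kr in ir.
have [a [b [adm mx]]] := max_exists u v kr.
exists (fun j => if j == k then a else u j), (fun j => if j == k then b else v j).
move=> i ik ir; rewrite ltnS leq_eqVlt in ik; case/orP: ik => [/eqP ->|ik].
  have e : forall j, (j < k)%N -> u j = (if j == k then a else u j) /\
                                   v j = (if j == k then b else v j).
    by move=> j jk; rewrite (ltn_eqF jk).
  split; first by rewrite eqxx; exact: adm_ext e adm.
  move=> a' b'; rewrite eqxx => h; apply: mx.
  apply: (adm_ext _ h) => j jk; by rewrite (ltn_eqF jk).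
apply: (good_ext _ (H i ik ir)) => j ji.
by rewrite (ltn_eqF (leq_ltn_trans ji ik)).
Qed.

Lemma ps_exists : exists u v, principal_system X1 X2 u v.
Proof.
have [u [v H]] := ps_prefix r; exists u, v => i ir; exact: H.
Qed.

End Seq.

Theorem mainTheorem1 (R : realType) (d : nat) (n : 'I_2 -> nat)
    (X : forall m : 'I_2, 'M[R]_(n m, d)) :
  (0 < d)%N ->
  (forall m, spec_norm_le1 (X m)) ->
  (forall m, (\rank (X m) < d)%N) ->
  let X1 := X ord0 in
  let X2 := X (@ord_max 1) in
  let P1 := kerproj X1 in
  let P2 := kerproj X2 in
  let cond1 := forall y : forall m : 'I_2, 'cV[R]_(n m),
      in_ST X y -> forgetting X y (id_ordering 1) 2 = 0 in
  let cond2 := X1 *m P2 *m P1 = 0 in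
  let cond3 := forall u v : nat -> 'cV[R]_d, principal_system X1 X2 u v ->
      forall i, (i < minn (\rank X1) (\rank X2))%N ->
        principal_angle u v i = 0 \/ principal_angle u v i = pi / 2 in
  (cond1 <-> cond2) /\ (cond2 <-> cond3).
Proof.
move=> d0 Hs Hr X1 X2 P1 P2 c1 c2 c3; split; first exact: (cond12 Hs Hr).
split.
  move=> /cond2_comm C u v PS i ir.
  rewrite /principal_angle; case: (comm_angles C PS ir) => ->.
    by right; rewrite acos0.
  by left; rewrite acos1.
move=> H3; apply/cond2_comm.
have [u [v PS]] := ps_exists X1 X2.
apply: (zo_comm PS) => i ir.
have [[_ _ nu nv _] _] := PS i ir.
have cs := unit_cs nu nv.
have cb : -1 <= `|dotv (u i) (v i)| <= 1.
  by rewrite cs andbT (le_trans (lerN10 _)).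
have [_ ca] := acos_def cb.
case: (H3 u v PS i ir); rewrite /principal_angle => e; rewrite e in ca.
  by right; rewrite -ca cos0.
by left; rewrite -ca cos_pihalf.
Qed.
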